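(* Let $H=(V,E)$ be a hypergraph whose vertex set $V$ is a partition of $[n]$ into sets of cardinality at least $2$, and suppose $H$ is downward-closed (for every $e\in E$ and every $e'\subseteq e$ with $|e'|>1$, $e'\in E$). Let $D=\{\bar i_I\}_{I\in V}$ with $\bar i_I\in I$ for each $I\in V$. Then \[\operatorname{aff}\mathrm{MC}^H=\Big\{w\in\mathbb{R}^{\mathcal{J}^H}\ \Big|\ w_J=\mathscr{L}\prod_{\bar i_I\in J\cap D}\Big(1-\sum_{i\in I\setminus\{\bar i_I\}}w_i\Big)\prod_{i\in J\setminus D}w_i\ \ \forall J\in\mathcal{J}^H\setminus\mathcal{J}^H_\le(D)\Big\}.\]
   Context: Let $n$ be a positive integer, $[n]=\{1,\dots,n\}$. A hypergraph $H=(V,E)$ here has as vertex set $V$ a family of pairwise disjoint subsets of $[n]$, each of cardinality at least $2$, and hyperedge set $E$ consisting of subsets $e\subseteq V$ with $|e|\ge 2$. Write $L(V)=\{\{I\}: I\in V\}$. For a nonempty $e\subseteq V$, $\mathcal{J}^e$ denotes the family of sets $J\subseteq \bigcup_{I\in e} I$ with $|J\cap I|=1$ for every $I\in e$. Let $\mathcal{J}^H=\bigcup_{e\in L(V)\cup E}\mathcal{J}^e$. For a vector $w$ indexed by sets, write $w_i=w_{\{i\}}$. Let $\mathscr{S}^H=\{w\in\{0,1\}^{\mathcal{J}^H}: \sum_{i\in I}w_i=1\ \forall I\in V;\ w_J=\prod_{i\in J}w_i\ \forall J\in\mathcal{J}^H, |J|>1\}$, $\mathrm{MC}^H=\operatorname{conv}\mathscr{S}^H$,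 and $\operatorname{aff}$ denotes affine hull. $\mathcal{J}^H_\le(D)=\{J\in\mathcal{J}^H: J\subseteq[n]\setminus D\}$. The linearization operator $\mathscr{L}$ expands the polynomial and replaces each monomial $\prod_{i\in J'}w_i$ ($J'\ne\varnothing$) by the coordinate $w_{J'}$, the empty monomial being the constant $1$; under the hypotheses every such $J'$ lies in $\mathcal{J}^H_\le(D)$, so the right-hand side is an affine function of $w$. *)

(* Defs.v *)
From HB Require Import structures.
From mathcomp Require Import all_boot all_order all_algebra.
From mathcomp Require Import mpoly.
Set Implicit Arguments.
Unset Strict Implicit.
Unset Printing Implicit Defensive.
Import Order.TTheory GRing.Theory Num.Theory.
Local Open Scope ring_scope.

(* Convention: [n] = {1,...,n} is represented by the ordinal type 'I_n.
   Vertices of H are sets I : {set 'I_n}; V : {set {set 'I_n}};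
   hyperedges e : {set {set 'I_n}} (subsets of V); E : {set {set {set 'I_n}}}. *)

Section Defs.
Variable n : nat.

Definition Jset (e : {set {set 'I_n}}) : {set {set 'I_n}} :=
  [set J : {set 'I_n} | (J \subset cover e) && [forall I in e, #|J :&: I| == 1%N]].

Definition LV (V : {set {set 'I_n}}) : {set {set {set 'I_n}}} :=
  [set [set I] | I in V].

Definition JH (V : {set {set 'I_n}}) (E : {set {set {set 'I_n}}}) : {set {set 'I_n}} :=
  \bigcup_(e in LV V :|: E) Jset e.

(* index type of the coordinates of R^{J^H} *)
Definition jidx (V : {set {set 'I_n}}) (E : {set {set {set 'I_n}}}) :=
  {J : {set 'I_n} | J \in JH V E}.

Variable R : realFieldType.
Variables (V : {set {set 'I_n}}) (E : {set {set {set 'I_n}}}).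

(* w_J for an arbitrary set J (0 if J is not a coordinate of R^{J^H}) *)
Definition wv (w : jidx V E -> R) (J : {set 'I_n}) : R :=
  if @insub _ (fun J => J \in JH V E) (jidx V E) J is Some j then w j else 0.

Definition SH (w : jidx V E -> R) : Prop :=
  [/\ (forall j, w j = 0 \/ w j = 1),
      (forall I, I \in V -> \sum_(i in I) wv w [set i] = 1) &
      (forall j : jidx V E, (1 < #|val j|)%N -> w j = \prod_(i in val j) wv w [set i])].

End Defs.

Section Hulls.
Variables (R : realFieldType) (T : Type).

Definition conv (A : (T -> R) -> Prop) (w : T -> R) : Prop :=
  exists (k : nat) (c : 'I_k -> R) (p : 'I_k -> T -> R),
    [/\ forall i, A (p i), forall i, 0 <= c i, \sum_i c i = 1 &
        forall t, w t = \sum_i c i * p i t].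

Definition aff (A : (T -> R) -> Prop) (w : T -> R) : Prop :=
  exists (k : nat) (c : 'I_k -> R) (p : 'I_k -> T -> R),
    [/\ forall i, A (p i), \sum_i c i = 1 &
        forall t, w t = \sum_i c i * p i t].
End Hulls.

Definition MC n (R : realFieldType) V E := conv (@SH n R V E).

Section Lin.
Variables (n : nat) (R : realFieldType).
Variables (V : {set {set 'I_n}}) (E : {set {set {set 'I_n}}}).

(* the linearization operator: expand p and replace each monomial
   prod_{i in J'} w_i (J' nonempty) by the coordinate w_{J'}; the empty monomial is 1.
   A monomial m is identified with its support J' = {i | m i > 0}. *)
Definition linz (w : jidx V E -> R) (p : {mpoly R[n]}) : R :=
  \sum_(m <- msupp p)
     mcoeff m p * (if m == mnm0 then 1 else wv w [set i | (0 < m i)%N]).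

Definition Xv (i : 'I_n) : {mpoly R[n]} := mpolyX R (mnm1 i).

Definition Dset (ibar : {set 'I_n} -> 'I_n) : {set 'I_n} := ibar @: V.

Definition rhs_poly (ibar : {set 'I_n} -> 'I_n) (J : {set 'I_n}) : {mpoly R[n]} :=
  (\prod_(I in V | ibar I \in J) (1 - \sum_(i in I :\ ibar I) Xv i)) *
  \prod_(i in J :\: Dset ibar) Xv i.
End Lin.

(* Main.v *)
Require Import Defs.
From HB Require Import structures.
From mathcomp Require Import all_boot all_order all_algebra.
From mathcomp Require Import mpoly.
Set Implicit Arguments.
Unset Strict Implicit.
Unset Printing Implicit Defensive.
Import Order.TTheory GRing.Theory Num.Theory.
Local Open Scope ring_scope.

Section Main.
Variables (R : realFieldType) (n : nat)
  (V : {set {set 'I_n}}) (E : {set {set {set 'I_n}}})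
  (ibar : {set 'I_n} -> 'I_n).
Hypotheses (HVpart : partition V [set: 'I_n])
  (HVcard : forall I : {set 'I_n}, I \in V -> (2 <= #|I|)%N)
  (HEsub : forall e : {set {set 'I_n}}, e \in E -> e \subset V)
  (HEcard : forall e : {set {set 'I_n}}, e \in E -> (2 <= #|e|)%N)
  (HEdown : forall e e' : {set {set 'I_n}}, e \in E -> e' \subset e -> (1 < #|e'|)%N -> e' \in E)
  (Hibar : forall I : {set 'I_n}, I \in V -> ibar I \in I).

Local Notation D := (Dset V ibar).
Local Notation JHs := (JH V E).
Local Notation jt := (jidx V E).

Lemma wv_in (w : jt -> R) K (h : K \in JHs) : wv w K = w (Sub K h).
Proof. by rewrite /wv insubT. Qed.

Lemma wv_out (w : jt -> R) K : K \notin JHs -> wv w K = 0.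
Proof. by move=> h; rewrite /wv insubN. Qed.

Lemma wv_val (w : jt -> R) j : wv w (val j) = w j.
Proof. by rewrite /wv valK. Qed.

Lemma Vtriv : trivIset V.
Proof. by case/and3P: HVpart. Qed.

Lemma Vcover : cover V = [set: 'I_n].
Proof. by case/and3P: HVpart => /eqP. Qed.

Lemma blk_def (I : {set 'I_n}) i : I \in V -> i \in I -> pblock V i = I.
Proof. by move=> HI Hi; apply: def_pblock Vtriv HI Hi. Qed.

Lemma blk_mem i : pblock V i \in V.
Proof. by apply: pblock_mem; rewrite Vcover inE. Qed.

Lemma blk_in i : i \in pblock V i.
Proof. by rewrite mem_pblock Vcover inE. Qed.

Lemma ibar_blk (I : {set 'I_n}) : I \in V -> pblock V (ibar I) = I.
Proof. by move=> HI; apply: blk_def HI (Hibar HI). Qed.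

Lemma ibar_inj : {in V &, injective ibar}.
Proof. by move=> I1 I2 H1 H2 He; rewrite -(ibar_blk H1) -(ibar_blk H2) He. Qed.

Lemma inD i : (i \in D) = (i == ibar (pblock V i)).
Proof.
apply/imsetP/eqP => [[I HI ->]|->]; first by rewrite ibar_blk.
by exists (pblock V i) => //; apply: blk_mem.
Qed.

Lemma edge_sub (e : {set {set 'I_n}}) : e \in LV V :|: E -> e \subset V.
Proof.
case/setUP => [/imsetP [I HI ->]|/HEsub //].
by rewrite sub1set.
Qed.

Lemma JHP (K : {set 'I_n}) : reflect (exists2 e, e \in LV V :|: E & K \in Jset e) (K \in JHs).
Proof. exact: bigcupP. Qed.

Lemma JsetP (e : {set {set 'I_n}}) (K : {set 'I_n}) : reflect (K \subset cover e /\ forall I, I \in e -> #|K :&: I| = 1%N)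
  (K \in Jset e).
Proof.
rewrite /Jset inE; apply: (iffP andP) => [[H1 /forall_inP H2]|[H1 H2]].
  by split => // I /H2 /eqP.
by split => //; apply/forall_inP => I /H2 ->.
Qed.

Lemma cover_blk (e : {set {set 'I_n}}) (K : {set 'I_n}) i : e \subset V -> K \subset cover e -> i \in K -> pblock V i \in e.
Proof.
move=> eV /subsetP KC /KC /bigcupP [I Ie iI].
by rewrite (blk_def (subsetP eV _ Ie) iI).
Qed.

Lemma JH_card (K : {set 'I_n}) : K \in JHs -> forall I, I \in V -> (#|K :&: I| <= 1)%N.
Proof.
case/JHP => e He /JsetP [KC Hc] I IV.
case: (boolP (I \in e)) => [/Hc -> //|Ie].
rewrite leq_eqVlt; apply/orP; right; rewrite ltnS leqn0 cards_eq0.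
apply/eqP/setP => i; rewrite !inE; apply/negP => /andP [iK iI].
move: (cover_blk (edge_sub He) KC iK); rewrite (blk_def IV iI).
by rewrite (negbTE Ie).
Qed.

Lemma JH_n0 (K : {set 'I_n}) : K \in JHs -> K != set0.
Proof.
case/JHP => e He /JsetP [KC Hc].
have : e != set0.
  case/setUP: He => [/imsetP [I _ ->]|/HEcard]; first by apply/set0Pn; exists I; rewrite inE.
  by apply: contraTneq => ->; rewrite cards0.
case/set0Pn => I /Hc /eqP; apply: contraTneq => ->; by rewrite set0I cards0.
Qed.

Lemma JH_single i : [set i] \in JHs.
Proof.
apply/JHP; exists [set pblock V i].
  by apply/setUP; left; apply/imsetP; exists (pblock V i) => //; apply: blk_mem.
apply/JsetP; split.
  by rewrite /cover big_set1 sub1set blk_in.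
move=> I; rewrite inE => /eqP ->.
by rewrite (setIidPl _) ?cards1 // sub1set blk_in.
Qed.

Lemma JH_down (J K : {set 'I_n}) : J \in JHs -> K != set0 ->
  (forall I, I \in V -> (#|K :&: I| <= 1)%N) ->
  (forall i, i \in K -> exists2 j, j \in J & pblock V i = pblock V j) ->
  K \in JHs.
Proof.
case/JHP => e He /JsetP [JC Hc] Kn0 Kc Kb.
have eV := edge_sub He.
pose e' := [set pblock V i | i in K].
have e'e : e' \subset e.
  apply/subsetP => I /imsetP [i iK ->]; case: (Kb i iK) => j jJ ->.
  exact: cover_blk eV JC jJ.
have KJ : K \in Jset e'.
  apply/JsetP; split.
    apply/subsetP => i iK; apply/bigcupP; exists (pblock V i); last exact: blk_in.
    by apply/imsetP; exists i.
  move=> I /imsetP [i0 i0K ->].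
  apply/eqP; rewrite eqn_leq Kc ?blk_mem //= card_gt0; apply/set0Pn; exists i0.
  by rewrite inE i0K blk_in.
apply/JHP; exists e' => //.
case: (ltnP 1 #|e'|) => He'.
  apply/setUP; right.
  case/setUP: He => [/imsetP [I0 _ HI0]|HE]; last exact: HEdown HE e'e He'.
  have H1 := subset_leq_card e'e; rewrite HI0 cards1 in H1.
  by move: (leq_ltn_trans H1 He'); rewrite ltnn.
apply/setUP; left.
have : #|e'| == 1%N.
  rewrite eqn_leq He' card_gt0; case/set0Pn: Kn0 => i iK; apply/set0Pn.
  by exists (pblock V i); apply/imsetP; exists i.
case/cards1P => I0 HI0; apply/imsetP; exists I0 => //.
by apply: (subsetP eV); apply: (subsetP e'e); rewrite HI0 set11.
Qed.


Lemma disj_intro (T : finType) (A B : {set T}) :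
  (forall x, x \in A -> x \in B -> False) -> [disjoint A & B].
Proof.
move=> H; rewrite -setI_eq0; apply/eqP/setP => x; rewrite !inE.
by apply/negP => /andP [/H a /a].
Qed.

Lemma disj_elim (T : finType) (A B : {set T}) x :
  [disjoint A & B] -> x \in A -> x \in B -> False.
Proof.
rewrite -setI_eq0 => /eqP H xa xb.
have : x \in A :&: B by rewrite inE xa xb.
by rewrite H inE.
Qed.

Lemma le1_eq (T : finType) (S : {set T}) a b : (#|S| <= 1)%N -> a \in S -> b \in S -> a = b.
Proof. by move=> /card_le1_eqP H aS bS; rewrite (H _ _ aS bS). Qed.

Definition Qp (A : {set 'I_n}) (B : {set {set 'I_n}}) (p : {mpoly R[n]}) :=
  forall m, m \in msupp p ->
  [/\ forall i, (m i <= 1)%N,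
      forall i, (0 < m i)%N -> i \in A /\ pblock V i \in B &
      forall i i', (0 < m i)%N -> (0 < m i')%N -> pblock V i = pblock V i' -> i = i'].

Lemma Qp_sub (A A' : {set 'I_n}) (B B' : {set {set 'I_n}}) p : A \subset A' -> B \subset B' -> Qp A B p -> Qp A' B' p.
Proof.
move=> /subsetP AA /subsetP BB H m /H [H1 H2 H3]; split => // i /H2 [/AA ? /BB ?].
by split.
Qed.

Lemma Qp1 (A : {set 'I_n}) (B : {set {set 'I_n}}) : Qp A B 1.
Proof.
move=> m; rewrite msupp1 inE => /eqP ->; split => [i|i|i i']; rewrite ?mnm0E //.
Qed.

Lemma QpX (A : {set 'I_n}) (B : {set {set 'I_n}}) i : i \in A -> pblock V i \in B -> Qp A B (Xv R i).
Proof.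
move=> iA iB m; rewrite /Xv msuppX inE => /eqP ->; split => [j|j|j j'];
  rewrite ?mnm1E; first by case: (i == j).
  by case: eqP => // <-.
by case: eqP => // <-; case: eqP => // <-.
Qed.

Lemma QpD (A : {set 'I_n}) (B : {set {set 'I_n}}) p q : Qp A B p -> Qp A B q -> Qp A B (p + q).
Proof. by move=> Hp Hq m /msuppD_le; rewrite mem_cat => /orP [/Hp|/Hq]. Qed.

Lemma QpB (A : {set 'I_n}) (B : {set {set 'I_n}}) p q : Qp A B p -> Qp A B q -> Qp A B (p - q).
Proof. by move=> Hp Hq m /msuppB_le; rewrite mem_cat => /orP [/Hp|/Hq]. Qed.

Lemma Qp_sum (A : {set 'I_n}) (B : {set {set 'I_n}}) (T : finType) (P : pred T) (F : T -> {mpoly R[n]}) :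
  (forall x, P x -> Qp A B (F x)) -> Qp A B (\sum_(x | P x) F x).
Proof.
move=> H m /msupp_sum_le /flattenP [s /mapP [x]].
by rewrite mem_filter => /andP [Px _] -> /(H _ Px).
Qed.

Lemma QpM (A : {set 'I_n}) (B1 B2 : {set {set 'I_n}}) p q : [disjoint B1 & B2] -> Qp A B1 p -> Qp A B2 q ->
  Qp A (B1 :|: B2) (p * q).
Proof.
move=> dB Hp Hq m /msuppM_le /allpairsP [[m1 m2] /= [m1p m2q ->]].
case: (Hp _ m1p) => [a1 b1 c1]; case: (Hq _ m2q) => [a2 b2 c2].
have ex1 i : (0 < m1 i)%N -> (0 < m2 i)%N -> False.
  by move=> /b1 [_ h1] /b2 [_ h2]; apply: disj_elim dB h1 h2.
have ex2 i i' : (0 < m1 i)%N -> (0 < m2 i')%N -> pblock V i = pblock V i' -> False.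
  by move=> /b1 [_ h1] /b2 [_ h2] He; rewrite He in h1; apply: disj_elim dB h1 h2.
split => [i|i|i i']; rewrite ?mnmDE.
- case: (posnP (m1 i)) => [->|h1]; first exact: a2.
  case: (posnP (m2 i)) => [->|h2]; first by rewrite addn0.
  by case: (ex1 i h1 h2).
- rewrite addn_gt0 => /orP [/b1|/b2] [-> h]; by rewrite inE h ?orbT.
- rewrite !addn_gt0 => /orP [h1|h2] /orP [h1'|h2'] He.
  + exact: c1.
  + by case: (ex2 _ _ h1 h2' He).
  + by case: (ex2 _ _ h1' h2 (esym He)).
  + exact: c2.
Qed.

Lemma Qp_prod (A : {set 'I_n}) (T : finType) (r : seq T) (F : T -> {mpoly R[n]}) (Bf : T -> {set {set 'I_n}}) :
  uniq r -> (forall x, x \in r -> Qp A (Bf x) (F x)) ->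
  (forall x y, x \in r -> y \in r -> x != y -> [disjoint Bf x & Bf y]) ->
  Qp A (\bigcup_(x <- r) Bf x) (\prod_(x <- r) F x).
Proof.
elim: r => [|a r IH] /=; first by rewrite !big_nil => _ _ _; apply: Qp1.
move=> /andP [ar ur] HF Hd; rewrite !big_cons.
apply: QpM; last apply: IH => //.
- apply: disj_intro => I Ia; rewrite bigcup_seq => /bigcupP [x xr Ix].
  have := Hd a x; rewrite !inE eqxx xr orbT => /(_ isT isT).
  have -> : a != x by apply: contraNneq ar => ->.
  by move=> /(_ isT) dax; apply: disj_elim dax Ia Ix.
- by apply: HF; rewrite inE eqxx.
- by move=> x xr; apply: HF; rewrite inE xr orbT.
- by move=> x y xr yr; apply: Hd; rewrite inE ?xr ?yr orbT.
Qed.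


Lemma notD_of I i : I \in V -> i \in I :\ ibar I -> i \in ~: D.
Proof.
move=> IV; rewrite !inE => /andP [ni iI]; rewrite inD (blk_def IV iI).
exact: ni.
Qed.

Lemma rhs_Qp (J : {set 'I_n}) : J \in JHs ->
  Qp (~: D) [set pblock V j | j in J] (rhs_poly R V ibar J).
Proof.
move=> JJ.
have Jc := JH_card JJ.
pose B1 := [set I in V | ibar I \in J].
pose B2 := [set pblock V i | i in J :\: D].
have Q1 : Qp (~: D) B1 (\prod_(I in V | ibar I \in J) (1 - \sum_(i in I :\ ibar I) Xv R i)).
  rewrite (eq_bigl (fun I => I \in B1)); last by move=> I; rewrite inE.
  rewrite -big_enum.
  apply: (@Qp_sub _ _ (\bigcup_(I <- enum B1) [set I])) => //.
    rewrite bigcup_seq; apply/subsetP => y /bigcupP [x]; rewrite mem_enum => xB.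
    by rewrite inE => /eqP ->.
  apply: Qp_prod; first exact: enum_uniq.
    move=> I; rewrite mem_enum inE => /andP [IV _].
    apply: QpB; first exact: Qp1.
    apply: Qp_sum => i Hi; apply: QpX; first exact: notD_of IV Hi.
    move: Hi; rewrite !inE => /andP [_ iI]; by rewrite (blk_def IV iI).
  move=> x y _ _ nxy; apply: disj_intro => z; rewrite !inE => /eqP -> /eqP.
  by move: nxy => /eqP.
have Q2 : Qp (~: D) B2 (\prod_(i in J :\: D) Xv R i).
  rewrite -big_enum.
  apply: (@Qp_sub _ _ (\bigcup_(i <- enum (J :\: D)) [set pblock V i])) => //.
    rewrite bigcup_seq; apply/subsetP => y /bigcupP [x]; rewrite mem_enum => xB.
    by rewrite inE => /eqP ->; apply/imsetP; exists x.
  apply: Qp_prod; first exact: enum_uniq.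
    move=> i; rewrite mem_enum !inE => /andP [niD _].
    by apply: QpX; rewrite ?inE.
  move=> x y; rewrite !mem_enum !inE => /andP [_ xJ] /andP [_ yJ] nxy.
  apply: disj_intro => z; rewrite !inE => /eqP -> /eqP Hxy.
  move: nxy => /eqP; apply; apply: (le1_eq (Jc _ (blk_mem x))).
    by rewrite inE xJ blk_in.
  by rewrite inE yJ Hxy blk_in.
apply: (@Qp_sub _ _ (B1 :|: B2)) => //.
  apply/subsetP => I; rewrite !inE => /orP [/andP [IV iJ]|/imsetP [i]].
    by apply/imsetP; exists (ibar I) => //; rewrite ibar_blk.
  by rewrite !inE => /andP [_ iJ] ->; apply/imsetP; exists i.
apply: QpM => //.
apply: disj_intro => I; rewrite inE => /andP [IV iJ] /imsetP [i].
rewrite !inE => /andP [niD iJ'] HI.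
move: niD; rewrite inD -HI; apply/negP; rewrite negbK; apply/eqP.
apply: (le1_eq (Jc _ IV)); rewrite inE ?iJ ?iJ' //.
  by rewrite HI blk_in.
exact: Hibar.
Qed.

Lemma mono_good (J : {set 'I_n}) m : J \in JHs -> m \in msupp (rhs_poly R V ibar J) ->
  [/\ forall i, (m i <= 1)%N, [set i | (0 < m i)%N] \subset ~: D &
      [set i | (0 < m i)%N] != set0 -> [set i | (0 < m i)%N] \in JHs].
Proof.
move=> JJ Hm; case: (rhs_Qp JJ Hm) => [a b c]; split => //.
  by apply/subsetP => i; rewrite inE => /b [].
move=> Kn0; apply: (JH_down JJ Kn0).
  move=> I IV; apply/card_le1_eqP => x y; rewrite !inE => /andP [hx xI] /andP [hy yI].
  by apply: c => //; rewrite (blk_def IV xI) (blk_def IV yI).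
move=> i; rewrite inE => /b [_ /imsetP [j jJ ->]]; by exists j.
Qed.


Lemma wv_aff (T : finType) (P : pred T) (c : T -> R) (p : T -> jt -> R) (w : jt -> R) :
  (forall t, w t = \sum_(i | P i) c i * p i t) ->
  forall K, wv w K = \sum_(i | P i) c i * wv (p i) K.
Proof.
move=> Hw K; case: (boolP (K \in JHs)) => HK.
  rewrite (wv_in _ HK) Hw; apply: eq_bigr => i _; by rewrite (wv_in _ HK).
by rewrite wv_out // big1 // => i _; rewrite wv_out // mulr0.
Qed.

Lemma linz_aff (T : finType) (P : pred T) (c : T -> R) (p : T -> jt -> R) (w : jt -> R) Pl :
  \sum_(i | P i) c i = 1 ->
  (forall t, w t = \sum_(i | P i) c i * p i t) ->
  linz w Pl = \sum_(i | P i) c i * linz (p i) Pl.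
Proof.
move=> Hc Hw; rewrite /linz.
under [RHS]eq_bigr => i _ do rewrite big_distrr.
rewrite exchange_big /=; apply: eq_bigr => m _.
under eq_bigr => i _ do rewrite mulrCA.
rewrite -big_distrr /=; congr (_ * _).
case: eqP => _; first by under eq_bigr => i _ do rewrite mulr1.
exact: wv_aff.
Qed.

Definition Eqw (w : jt -> R) := forall j : jt, ~~ (val j \subset ~: D) ->
  w j = linz w (rhs_poly R V ibar (val j)).

Lemma Eq_aff (T : finType) (P : pred T) (c : T -> R) (p : T -> jt -> R) (w : jt -> R) :
  (forall i, P i -> Eqw (p i)) -> \sum_(i | P i) c i = 1 ->
  (forall t, w t = \sum_(i | P i) c i * p i t) -> Eqw w.
Proof.
move=> Hp Hc Hw j Hj; rewrite Hw (linz_aff _ Hc Hw).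
by apply: eq_bigr => i Pi; rewrite (Hp i Pi j Hj).
Qed.

Lemma SH_prod (x : jt -> R) K : SH x -> K \in JHs -> wv x K = \prod_(i in K) wv x [set i].
Proof.
case=> _ _ H3 HK; case: (ltnP 1 #|K|) => h.
  by rewrite (wv_in _ HK); exact: (H3 (Sub K HK) h).
have : #|K| == 1%N by rewrite eqn_leq h card_gt0 (JH_n0 HK).
by case/cards1P => a ->; rewrite big_set1.
Qed.

Lemma linz_eval (x : jt -> R) Pl : SH x ->
  (forall m, m \in msupp Pl -> (forall i, (m i <= 1)%N) /\
     ([set i | (0 < m i)%N] != set0 -> [set i | (0 < m i)%N] \in JHs)) ->
  linz x Pl = Pl.@[fun i => wv x [set i]].
Proof.
move=> Hx HP; rewrite mevalE /linz; apply: eq_big_seq => m Hm; congr (_ * _).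
case: (HP m Hm) => H1 H2.
case: eqP => [->|nm0]; first by rewrite big1 // => i _; rewrite mnm0E expr0.
case: (boolP ([set i | (0 < m i)%N] == set0)) => [/eqP K0|Kn0].
  exfalso; apply: nm0; apply/mnmP => i; rewrite mnm0E.
  have : i \notin [set i | (0 < m i)%N] by rewrite K0 inE.
  by rewrite inE -eqn0Ngt => /eqP.
rewrite (SH_prod Hx (H2 Kn0)) big_mkcond /=; apply: eq_bigr => i _; rewrite inE.
case: (posnP (m i)) => [->|h]; first by rewrite expr0.
have -> : m i = 1%N by apply/eqP; rewrite eqn_leq H1 h.
by rewrite expr1.
Qed.

Lemma meval_prod (v : 'I_n -> R) (T : finType) (P : pred T) (F : T -> {mpoly R[n]}) :
  (\prod_(i | P i) F i).@[v] = \prod_(i | P i) (F i).@[v].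
Proof. exact: rmorph_prod. Qed.

Lemma meval_sum (v : 'I_n -> R) (T : finType) (P : pred T) (F : T -> {mpoly R[n]}) :
  (\sum_(i | P i) F i).@[v] = \sum_(i | P i) (F i).@[v].
Proof. exact: raddf_sum. Qed.

Lemma SH_Eq (x : jt -> R) : SH x -> forall j : jt, x j = linz x (rhs_poly R V ibar (val j)).
Proof.
move=> Hx j; have JJ := valP j; set J := val j in JJ *.
rewrite linz_eval //; last first.
  by move=> m Hm; case: (mono_good JJ Hm).
set v := fun i => wv x [set i].
case: (Hx) => _ H2 _.
rewrite /rhs_poly mevalM !meval_prod.
under eq_bigr => I _ do rewrite mevalB meval1 meval_sum.
under [X in _ * X]eq_bigr => i _ do rewrite mevalXU.
rewrite (eq_bigr (fun I => v (ibar I))); last first.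
  move=> I /andP [IV _]; have := H2 I IV; rewrite (big_setD1 (ibar I)) ?Hibar // => h.
  under eq_bigr => i _ do rewrite mevalXU.
  by rewrite -h addrK.
rewrite (eq_bigl (fun I => I \in [set I in V | ibar I \in J])); last by move=> I; rewrite inE.
rewrite -big_imset /=; last by move=> I1 I2; rewrite !inE => /andP [H1 _] /andP [H3 _]; apply: ibar_inj.
have -> : [set ibar I | I in [set I in V | ibar I \in J]] = J :&: D.
  apply/setP => i; rewrite inE; apply/imsetP/andP => [[I]|[iJ iD]].
    by rewrite inE => /andP [IV iJ] ->; split => //; apply/imsetP; exists I.
  case/imsetP: iD => I IV Hi; exists I => //; rewrite inE IV -Hi iJ.
  by [].
by rewrite -big_setID -(SH_prod Hx JJ) wv_val.
Qed.


Lemma span_aux (F : {set {set 'I_n}}) b : forall W : {set 'I_n} -> R,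
  (forall K, K \in F -> (b <= #|K|)%N -> W K = 0) ->
  exists c : {set 'I_n} -> R, forall K, K \in F -> W K = \sum_(T in F) c T * (K \subset T)%:R.
Proof.
elim: b => [|b IH] W HW.
  by exists (fun _ => 0) => K KF; rewrite HW // big1 // => T _; rewrite mul0r.
pose W' K := W K - \sum_(T in F | #|T| == b) W T * (K \subset T)%:R.
have HW' : forall K, K \in F -> (b <= #|K|)%N -> W' K = 0.
  move=> K KF; rewrite leq_eqVlt => /orP [/eqP hb|hb].
    rewrite /W' (bigD1 K) /=; last by rewrite KF -hb eqxx.
    rewrite subxx mulr1 big1 ?addr0 ?subrr //.
    move=> T /andP [/andP [TF /eqP Tb] nTK].
    case: (boolP (K \subset T)) => h; last by rewrite mulr0.
    have : K == T by rewrite eqEcard h Tb hb /= leqnn.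
    by move=> /eqP KT; rewrite KT eqxx in nTK.
  rewrite /W' HW // big1 ?subrr // => T /andP [_ /eqP Tb].
  case: (boolP (K \subset T)) => h; last by rewrite mulr0.
  by have := subset_leq_card h; rewrite Tb leqNgt hb.
case: (IH W' HW') => c Hc.
exists (fun T => c T + (if #|T| == b then W T else 0)) => K KF.
under eq_bigr => T _ do rewrite mulrDl.
rewrite big_split /= -Hc //.
have -> : \sum_(T in F) (if #|T| == b then W T else 0) * (K \subset T)%:R =
          \sum_(T in F | #|T| == b) W T * (K \subset T)%:R.
  by rewrite big_mkcondr; apply: eq_bigr => T _; case: ifP => _; rewrite ?mul0r.
by rewrite subrK.
Qed.

Lemma span (F : {set {set 'I_n}}) (W : {set 'I_n} -> R) :
  exists c : {set 'I_n} -> R, forall K, K \in F -> W K = \sum_(T in F) c T * (K \subset T)%:R.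
Proof.
apply: (@span_aux F n.+1) => K _.
by have := subset_leq_card (subsetT K); rewrite cardsT card_ord leqNgt => /negbTE ->.
Qed.

Definition ST (T : {set 'I_n}) := T :|: [set ibar I | I in [set I in V | [disjoint I & T]]].
Definition xT (T : {set 'I_n}) : jt -> R := fun j => (val j \subset ST T)%:R.

Lemma wv_xT T i : wv (xT T) [set i] = (i \in ST T)%:R.
Proof. by rewrite (wv_in _ (JH_single i)) /xT /= sub1set. Qed.

Lemma prod_ind (S K : {set 'I_n}) : \prod_(i in K) (i \in S)%:R = (K \subset S)%:R :> R.
Proof.
case: (boolP (K \subset S)) => h.
  by rewrite big1 // => i iK; rewrite (subsetP h i iK).
by case/subsetPn: h => i iK niS; rewrite (bigD1 i) //= (negbTE niS) mul0r.
Qed.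

Definition Fset := [set T : {set 'I_n} | (T \subset ~: D) && ((T == set0) || (T \in JHs))].

Lemma ST_block T I : T \in Fset -> I \in V -> exists a, I :&: ST T = [set a].
Proof.
rewrite inE => /andP [TD T0] IV.
have HT1 : (#|T :&: I| <= 1)%N.
  case/orP: T0 => [/eqP ->|TJ]; first by rewrite set0I cards0.
  exact: JH_card.
case: (boolP [disjoint I & T]) => dIT.
  exists (ibar I); apply/setP => y; rewrite !inE; apply/andP/eqP.
    move=> [yI /orP [yT|/imsetP [I' HI' Hy]]]; first by case: (disj_elim dIT yI yT).
    subst y; move: HI'; rewrite inE => /andP [I'V _].
    by rewrite -(blk_def IV yI) (ibar_blk I'V).
  move=> ->; split; first exact: Hibar.
  by apply/orP; right; apply/imsetP; exists I => //; rewrite inE IV dIT.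
have : I :&: T != set0 by rewrite setI_eq0.
case/set0Pn => t; rewrite inE => /andP [tI tT].
exists t; apply/setP => y; rewrite !inE; apply/andP/eqP.
  move=> [yI /orP [yT|/imsetP [I' HI' Hy]]].
    by apply: (le1_eq HT1); rewrite inE ?yT ?yI ?tT ?tI.
  move: HI'; rewrite inE => /andP [I'V dI'].
  have II' : I' = I by rewrite -(blk_def IV yI) Hy ibar_blk.
  by rewrite II' (negbTE dIT) in dI'.
by move=> ->; rewrite tI tT.
Qed.

Lemma SH_xT T : T \in Fset -> SH (xT T).
Proof.
move=> TF; split.
- by move=> j; rewrite /xT; case: (_ \subset _); [right|left].
- move=> I IV; under eq_bigr => i _ do rewrite wv_xT.
  case: (ST_block TF IV) => a Ha.
  have : a \in I :&: ST T by rewrite Ha set11.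
  rewrite inE => /andP [aI aS].
  rewrite (bigD1 a) //= aS big1 ?addr0 // => i /andP [iI nia].
  case: (boolP (i \in ST T)) => // iS.
  have : i \in I :&: ST T by rewrite inE iI iS.
  by rewrite Ha inE (negbTE nia).
- by move=> j _; under eq_bigr => i _ do rewrite wv_xT; rewrite prod_ind.
Qed.

Lemma xT_free T (j : jt) : val j \subset ~: D -> xT T j = (val j \subset T)%:R.
Proof.
move=> jD; rewrite /xT; suff -> : (val j \subset ST T) = (val j \subset T) by [].
apply/idP/idP => h; last first.
  by apply: (subset_trans h); apply: subsetUl.
apply/subsetP => k kj; move: (subsetP h k kj); rewrite inE => /orP [//|/imsetP [I HI kI]].
move: (subsetP jD k kj); rewrite inE kI; case/negP; apply/imsetP; exists I => //.
by move: HI; rewrite inE => /andP [].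
Qed.

Lemma MC_SH (x : jt -> R) : SH x -> @MC n R V E x.
Proof.
move=> Hx; exists 1%N, (fun _ => 1), (fun _ => x); split.
- by move=> _.
- by move=> _; apply: ler01.
- by rewrite big_ord1.
- by move=> t; rewrite big_ord1 mul1r.
Qed.

Lemma MC_Eq (x : jt -> R) : @MC n R V E x -> Eqw x.
Proof.
case=> k [c [p [Hp _ Hc Hw]]].
apply: (@Eq_aff _ (fun _ => true) c p) => // i _ j _.
exact: SH_Eq (Hp i) j.
Qed.

Lemma main (w : jt -> R) : aff (@MC n R V E) w <-> Eqw w.
Proof.
split.
  case=> k [c [p [Hp Hc Hw]]].
  apply: (@Eq_aff _ (fun _ => true) c p) => // i _; exact: MC_Eq.
move=> Hw.
pose W := fun K : {set 'I_n} => if K == set0 then 1 else wv w K.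
case: (span Fset W) => c Hc.
have F0 : set0 \in Fset by rewrite inE sub0set eqxx.
have Hc1 : \sum_(T in Fset) c T = 1.
  have := Hc set0 F0; rewrite /W eqxx => ->; apply: eq_bigr => T _.
  by rewrite sub0set mulr1.
pose pw := fun t => \sum_(T in Fset) c T * xT T t.
have Eqpw : Eqw pw.
  apply: (@Eq_aff _ (mem Fset) c xT) => // T HT j _.
  exact: SH_Eq (SH_xT HT) j.
have Hfree : forall j : jt, val j \subset ~: D -> w j = pw j.
  move=> j Hj; rewrite /pw.
  under eq_bigr => T HT do rewrite xT_free //.
  have jF : val j \in Fset by rewrite inE Hj (valP j) orbT.
  rewrite -Hc // /W (negbTE (JH_n0 (valP j))).
  by rewrite wv_val.
have Hall : forall j : jt, w j = pw j.
  move=> j; case: (boolP (val j \subset ~: D)) => h; first exact: Hfree.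
  rewrite (Hw j h) (Eqpw j h) /linz; apply: eq_big_seq => m Hm; congr (_ * _).
  case: eqP => // _.
  case: (mono_good (valP j) Hm) => _ Hsub _.
  case: (boolP ([set i | (0 < m i)%N] \in JHs)) => HK; last by rewrite !wv_out.
  by rewrite !(wv_in _ HK); apply: Hfree.
exists #|Fset|, (fun i => c (enum_val i)), (fun i => xT (enum_val i)); split.
- by move=> i; apply: MC_SH; apply: SH_xT; exact: enum_valP.
- by rewrite -(big_enum_val (fun T => c T)).
- by move=> t; rewrite Hall /pw (big_enum_val (fun T => c T * xT T t)).
Qed.

End Main.

Theorem theorem3p6 (R : realFieldType) (n : nat)
  (V : {set {set 'I_n}}) (E : {set {set {set 'I_n}}})
  (ibar : {set 'I_n} -> 'I_n)
  (HVpart : partition V [set: 'I_n])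
  (HVcard : forall I : {set 'I_n}, I \in V -> (2 <= #|I|)%N)
  (HEsub : forall e : {set {set 'I_n}}, e \in E -> e \subset V)
  (HEcard : forall e : {set {set 'I_n}}, e \in E -> (2 <= #|e|)%N)
  (HEdown : forall e e' : {set {set 'I_n}}, e \in E -> e' \subset e -> (1 < #|e'|)%N -> e' \in E)
  (Hibar : forall I : {set 'I_n}, I \in V -> ibar I \in I) :
  forall w : jidx V E -> R,
    aff (@MC n R V E) w <->
    (forall j : jidx V E, ~~ (val j \subset ~: @Dset n V ibar) ->
       w j = @linz n R V E w (@rhs_poly n R V ibar (val j))).
Proof.
move=> w; exact: main.
Qed.
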